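(* Consider the remote-attestation Stackelberg game described in the context with a single device $\delta$ (so $\mathcal{D}=\{\delta\}$ and the only device class is $\mathcal{E}=\{\delta\}$) and a single attestation method $m$ (so $\mathcal{M}=\{m\}$). Let the defender's strategy be $p_\delta^m\in[0,1]$ and define $$\tau_\delta=\frac{1}{\mu^m}\cdot\frac{C_A^{\mathcal{E}}+C_A^\delta-G_A^\delta}{L_A^\delta-G_A^\delta}.$$ Then the attacker's best-response set is $$\mathcal{F}(\vec p)=\begin{cases}\{1\}&\text{if } p_\delta^m<\tau_\delta,\\ \{0,1\}&\text{if } p_\delta^m=\tau_\delta,\\ \{0\}&\text{otherwise.}\end{cases}$$
   Context: Remote-attestation game: there is a finite set $\mathcal{D}$ of devices partitioned into pairwise disjoint device classes $\mathcal{E}_1,\dots,\mathcal{E}_n$ (with $\bigcup_i\mathcal{E}_i=\mathcal{D}$), and a finite set $\mathcal{M}$ of attestation methods. Constants: for each method $m$, a detection probability $\mu^m$ (probability that running $m$ on a compromised device detects the compromise) and a defender cost $C_D^m$ of running $m$ on a device; for each device $\delta$, an attacker cost $C_A^\delta$ of attacking $\delta$; for each class $\mathcal{E}$, an attacker cost $C_A^{\mathcal{E}}$ of developing an exploit for $\mathcal{E}$; for each device $\delta$, defender gain $G_D^\delta$ and loss $L_D^\delta$, attacker gain $G_A^\delta$ and loss $L_A^\delta$ (losses are represented as negative values), with $G_D^\delta=-L_A^\delta$ and $L_D^\delta=-G_A^\delta$. The defender (leader) chooses $\vec p=\langle p_\delta^m\rangle\in[0,1]^{|\mathcal{D}\times\mathcal{M}|}$,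 where $p_\delta^m$ is the probability of running method $m$ on device $\delta$; the attacker (follower) chooses $\vec a=\langle a_\delta\rangle\in\{0,1\}^{|\mathcal{D}|}$ ($a_\delta=1$ means attacking $\delta$). Detection probability: $P_\delta(\vec p)=1-\prod_{m\in\mathcal{M}}(1-\mu^m p_\delta^m)$. Defender cost $C_D^T(\vec p)=\sum_{\delta}\sum_m C_D^m p_\delta^m$. Defender utility $U_D(\vec p,\vec a)=\sum_{\delta}[G_D^\delta P_\delta(\vec p)+L_D^\delta(1-P_\delta(\vec p))]a_\delta-C_D^T(\vec p)$. Attacker cost $C_A^T(\vec a)=\sum_{\mathcal{E}}\big(C_A^{\mathcal{E}}\cdot 1_{\{\exists\delta\in\mathcal{E}:a_\delta=1\}}+\sum_{\delta\in\mathcal{E}}C_A^\delta a_\delta\big)$. Attacker utility $U_A(\vec p,\vec a)=\sum_\delta[L_A^\delta P_\delta(\vec p)+G_A^\delta(1-P_\delta(\vec p))]a_\delta-C_A^T(\vec a)$. The attacker's best-response set is $\mathcal{F}(\vec p)=\operatorname{argmax}_{\vec a}U_A(\vec p,\vec a)$. *)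

(* Defs.v *)
From HB Require Import structures.
From mathcomp Require Import all_boot all_order all_algebra.
Set Implicit Arguments. Unset Strict Implicit. Unset Printing Implicit Defensive.
Import Order.TTheory GRing.Theory Num.Theory.
Local Open Scope ring_scope.

(* Devices D, methods M, device classes E; [cls d] is the class of device d,
   so the classes {d | cls d = e} are pairwise disjoint and cover D. *)

Definition detP (R : numDomainType) (D M : finType)
  (mu : M -> R) (p : D -> M -> R) (d : D) : R :=
  1 - \prod_(m : M) (1 - mu m * p d m).

Definition att_cost (R : numDomainType) (D E : finType) (cls : D -> E)
  (CE : E -> R) (Cd : D -> R) (a : {ffun D -> bool}) : R :=
  \sum_(e : E) ((if [exists d, (cls d == e) && a d] then CE e else 0)
                + \sum_(d | cls d == e) Cd d * (a d)%:R).

Definition UA (R : numDomainType) (D M E : finType) (mu : M -> R)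
  (LA GA : D -> R) (cls : D -> E) (CE : E -> R) (Cd : D -> R)
  (p : D -> M -> R) (a : {ffun D -> bool}) : R :=
  \sum_(d : D) (LA d * detP mu p d + GA d * (1 - detP mu p d)) * (a d)%:R
  - att_cost cls CE Cd a.

Definition BR (R : numDomainType) (D M E : finType) (mu : M -> R)
  (LA GA : D -> R) (cls : D -> E) (CE : E -> R) (Cd : D -> R)
  (p : D -> M -> R) : {set {ffun D -> bool}} :=
  [set a | [forall b : {ffun D -> bool},
              UA mu LA GA cls CE Cd p b <= UA mu LA GA cls CE Cd p a]].

(* Main.v *)
Require Import Defs.
From HB Require Import structures.
From mathcomp Require Import all_boot all_order all_algebra.
From mathcomp Require Import ring lra.
Import Order.TTheory GRing.Theory Num.Theory.
Local Open Scope ring_scope.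

Lemma sum_unit1 (R : nmodType) (F : unit -> R) : \sum_(i : unit) F i = F tt.
Proof. by rewrite (big_pred1 tt) // => -[]. Qed.

Lemma prod_unit1 (R : realFieldType) (F : unit -> R) : \prod_(i : unit) F i = F tt.
Proof. by rewrite (big_pred1 tt) // => -[]. Qed.

Lemma sum_unit2 (R : nmodType) (F : unit -> R) : \sum_(i : unit | tt == tt) F i = F tt.
Proof. by rewrite (big_pred1 tt) // => -[]. Qed.

Lemma ffun_unit (b : {ffun unit -> bool}) : b = [ffun => b tt].
Proof. by apply/ffunP => -[]; rewrite ffunE. Qed.

Lemma UA_eq (R : realFieldType) (mu : unit -> R) (LA GA Cd : unit -> R)
  (CE : unit -> R) (p : unit -> unit -> R) (b : {ffun unit -> bool}) :
  UA mu LA GA (fun _ : unit => tt) CE Cd p b =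
  if b tt then LA tt * (mu tt * p tt tt) + GA tt * (1 - mu tt * p tt tt) - (CE tt + Cd tt)
  else 0.
Proof.
rewrite /UA /att_cost /detP !sum_unit1 prod_unit1.
have -> : [exists d, (tt == tt) && b d] = b tt.
  apply/existsP; case: ifP => [H|H]; first by exists tt.
  by move=> [[]] /=; rewrite H.
case: (b tt) => /=; rewrite ?mulr1 ?mulr0; ring.
Qed.

Theorem lemma1 (R : realFieldType) (mu : unit -> R) (LA GA Cd : unit -> R)
  (CE : unit -> R) (p : unit -> unit -> R)
  (Hmu : 0 < mu tt <= 1) (HLA : LA tt < 0) (HGA : 0 <= GA tt)
  (Hp : 0 <= p tt tt <= 1) :
  let tau := (mu tt)^-1 * ((CE tt + Cd tt - GA tt) / (LA tt - GA tt)) in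
  BR mu LA GA (fun _ : unit => tt) CE Cd p =
    if p tt tt < tau then [set [ffun => true]]
    else if p tt tt == tau then [set: {ffun unit -> bool}]
    else [set [ffun => false]].
Proof.
move=> tau.
set U1 := LA tt * (mu tt * p tt tt) + GA tt * (1 - mu tt * p tt tt) - (CE tt + Cd tt).
have hmu : 0 < mu tt by case/andP: Hmu.
have hd : LA tt - GA tt < 0 by lra.
have hc : mu tt * (LA tt - GA tt) < 0 by rewrite pmulr_rlt0.
have eU : U1 = mu tt * (LA tt - GA tt) * (p tt tt - tau).
  rewrite /U1 /tau; field.
  by rewrite (ltr0_neq0 hd) (lt0r_neq0 hmu).
have k1 : (0 < U1) = (p tt tt < tau).
  by rewrite eU nmulr_rgt0 // subr_lt0.
have k2 : (U1 == 0) = (p tt tt == tau).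
  by rewrite eU mulf_eq0 (negbTE (ltr0_neq0 hc)) /= subr_eq0.
have mem : forall b : {ffun unit -> bool},
  (b \in BR mu LA GA (fun _ : unit => tt) CE Cd p) = (if b tt then 0 <= U1 else U1 <= 0).
  move=> b; rewrite inE; apply/forallP/idP.
    move=> H; have := H [ffun => ~~ b tt]; rewrite !UA_eq ffunE.
    by case: (b tt).
  move=> H c; rewrite !UA_eq; case: (c tt); case: (b tt) H => //; rewrite ?lexx //.
have tf : ([ffun=> true] == [ffun=> false] :> {ffun unit -> bool}) = false.
  by apply/eqP => /ffunP/(_ tt); rewrite !ffunE.
have ft : ([ffun=> false] == [ffun=> true] :> {ffun unit -> bool}) = false.
  by rewrite eq_sym.
apply/setP => b; rewrite mem (ffun_unit b) -k1 -k2.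
rewrite ffunE; case: (b tt) => /=; case: (ltgtP 0 U1) => //= _;
  by rewrite ?in_set1 ?in_setT ?eqxx ?tf ?ft.
Qed.
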